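(* Let $d > 0$ and $0<\alpha\le 1$. Then there is a constant $c = c(d,\alpha) > 0$, depending only on $d$ and $\alpha$, such that the following holds: for every $n \in \mathbb{N}$, every $m \in \{1,\ldots,n-1\}$, every $V \in G(n,n-m)$, and every purely $m$-unrectifiable measure $\mu$ on $\mathbb{R}^n$ satisfying \[ \limsup_{r \downarrow 0} \frac{\mu\bigl(B(x,2r)\bigr)}{\mu\bigl(B(x,r)\bigr)} < d \quad \text{for $\mu$-almost all } x \in \mathbb{R}^n, \] it holds that \[ \limsup_{r \downarrow 0} \frac{\mu\bigl( X(x,r,V,\alpha) \bigr)}{\mu\bigl( B(x,r) \bigr)} \ge c \] for $\mu$-almost every $x \in \mathbb{R}^n$.
   Context: A measure means a locally finite, nontrivial, Borel regular outer measure defined on all subsets of $\mathbb{R}^n$. $G(n,n-m)$ denotes the space of all $(n-m)$-dimensional linear subspaces of $\mathbb{R}^n$. $B(x,r)$ is the closed ball with center $x$ and radius $r$. For $x \in \mathbb{R}^n$, $V \in G(n,n-m)$, $0<\alpha\le1$, $r>0$: $X(x,V,\alpha) = \{ y \in \mathbb{R}^n : \operatorname{dist}(y-x,V) < \alpha|y-x| \}$ and $X(x,r,V,\alpha) = B(x,r) \cap X(x,V,\alpha)$. A set $A \subset \mathbb{R}^n$ is $m$-rectifiable if there are Lipschitz maps $f_i \colon \mathbb{R}^m \to \mathbb{R}^n$, $i=1,2,\ldots$, such that $\mathcal{H}^m\bigl(A \setminus \bigcup_i f_i(\mathbb{R}^m)\bigr) = 0$, where $\mathcal{H}^m$ is the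 $m$-dimensional Hausdorff measure. A measure $\mu$ on $\mathbb{R}^n$ is purely $m$-unrectifiable if $\mu(A) = 0$ for every $m$-rectifiable set $A \subset \mathbb{R}^n$. *)

(* Defs.v *)
From HB Require Import structures.
From mathcomp Require Import all_boot all_order all_algebra.
From mathcomp Require Import all_classical all_reals all_analysis.
Set Implicit Arguments. Unset Strict Implicit. Unset Printing Implicit Defensive.
Import Order.TTheory GRing.Theory Num.Theory.
Local Open Scope classical_set_scope.
Local Open Scope ring_scope.

Section Defs.
Variable R : realType.

Definition enorm (n : nat) (x : 'rV[R]_n) : R :=
  Num.sqrt (\sum_(i < n) (x ord0 i) ^+ 2).

Definition cball (n : nat) (x : 'rV[R]_n) (r : R) : set 'rV[R]_n :=
  [set y | enorm (y - x) <= r].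

Definition eopen (n : nat) (U : set 'rV[R]_n) : Prop :=
  forall x, U x -> exists2 r : R, 0 < r & [set y | enorm (y - x) < r] `<=` U.

Definition borel (n : nat) (A : set 'rV[R]_n) : Prop :=
  forall S : set (set 'rV[R]_n), sigma_algebra setT S -> (forall U, eopen U -> S U) -> S A.

Definition outer_measure_on (n : nat) (mu : set 'rV[R]_n -> \bar R) : Prop :=
  [/\ mu set0 = 0%E,
      (forall A, (0 <= mu A)%E),
      (forall A B, A `<=` B -> (mu A <= mu B)%E) &
      (forall F : nat -> set 'rV[R]_n,
          (mu (\bigcup_k F k) <= \sum_(k <oo) mu (F k))%E)].

Definition mu_measurable (n : nat) (mu : set 'rV[R]_n -> \bar R) (A : set 'rV[R]_n) :=
  forall E, mu E = (mu (E `&` A) + mu (E `&` ~` A))%E.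

(* a "measure" in the sense of the paper: locally finite, nontrivial,
   Borel regular outer measure on R^n *)
Definition is_measure (n : nat) (mu : set 'rV[R]_n -> \bar R) : Prop :=
  [/\ outer_measure_on mu,
      (forall x, exists2 r : R, 0 < r & (mu (cball x r) < +oo)%E),
      (exists A, mu A <> 0%E),
      (forall B, borel B -> mu_measurable mu B) &
      (forall A, exists B, [/\ borel B, A `<=` B & mu B = mu A])].

Definition ae (n : nat) (mu : set 'rV[R]_n -> \bar R) (P : 'rV[R]_n -> Prop) :=
  mu [set x | ~ P x] = 0%E.

(* diameter (of a nonempty set; the empty set gets diameter 0) *)
Definition diam (n : nat) (E : set 'rV[R]_n) : \bar R :=
  if pselect (E = set0) then 0%E
  else ereal_sup [set (enorm (x - y))%:E | x in E & y in E].

(* unnormalized Hausdorff delta-content and measure H^m *)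
Definition hcontent (n m : nat) (delta : R) (A : set 'rV[R]_n) : \bar R :=
  ereal_inf [set (\sum_(k <oo) ((fine (diam (E k))) ^+ m)%:E)%E
            | E in [set E : nat -> set 'rV[R]_n |
                      A `<=` \bigcup_k E k /\ forall k, (diam (E k) <= delta%:E)%E]].

Definition hausdorff (n m : nat) (A : set 'rV[R]_n) : \bar R :=
  ereal_sup [set hcontent m delta A | delta in [set delta : R | 0 < delta]].

Definition lipschitz (m n : nat) (f : 'rV[R]_m -> 'rV[R]_n) : Prop :=
  exists L : R, forall x y, enorm (f x - f y) <= L * enorm (x - y).

Definition rectifiable (n m : nat) (A : set 'rV[R]_n) : Prop :=
  exists f : nat -> 'rV[R]_m -> 'rV[R]_n,
    (forall i, lipschitz (f i)) /\
    hausdorff m (A `\` \bigcup_i range (f i)) = 0%E.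

Definition purely_unrectifiable (n m : nat) (mu : set 'rV[R]_n -> \bar R) : Prop :=
  forall A, rectifiable m A -> mu A = 0%E.

(* distance from z to the linear subspace spanned by the rows of V *)
Definition dist_sub (n : nat) (z : 'rV[R]_n) (V : 'M[R]_n) : R :=
  inf [set enorm (z - v) | v in [set v : 'rV[R]_n | (v <= V)%MS]].

Definition cone (n : nat) (x : 'rV[R]_n) (V : 'M[R]_n) (alpha : R) : set 'rV[R]_n :=
  [set y | dist_sub (y - x) V < alpha * enorm (y - x)].

Definition cone_r (n : nat) (x : 'rV[R]_n) (r : R) (V : 'M[R]_n) (alpha : R) :=
  cball x r `&` cone x V alpha.

Definition limsup0 (g : R -> R) : \bar R :=
  ereal_inf [set ereal_sup [set (g r)%:E | r in [set r : R | 0 < r < delta]]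
            | delta in [set delta : R | 0 < delta]].

(* the mu_ratio mu(A)/mu(B) (both finite for small radii by local finiteness) *)
Definition mu_ratio (n : nat) (mu : set 'rV[R]_n -> \bar R) (A B : set 'rV[R]_n) : R :=
  fine (mu A) / fine (mu B).

End Defs.

(* Main.v *)
Require Import Defs.
From HB Require Import structures.
From mathcomp Require Import all_boot all_order all_algebra.
From mathcomp Require Import all_classical all_reals all_analysis.
From mathcomp Require Import ring lra zify.
Import Order.TTheory GRing.Theory Num.Theory.
Local Open Scope classical_set_scope.
Local Open Scope ring_scope.
Set Implicit Arguments. Unset Strict Implicit.


Section Enorm.
Variable R : realType.
Variable n : nat.
Implicit Types v w : 'rV[R]_n.

Definition sq v : R := \sum_(i < n) (v ord0 i) ^+ 2.

Lemma sq_ge0 v : 0 <= sq v.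
Proof. by apply: sumr_ge0 => i _; rewrite sqr_ge0. Qed.

Lemma enormE v : enorm v = Num.sqrt (sq v).
Proof. by []. Qed.

Lemma enorm_ge0 v : 0 <= enorm v.
Proof. exact: sqrtr_ge0. Qed.

Lemma enorm0 : enorm (0 : 'rV[R]_n) = 0.
Proof. rewrite enormE /sq big1 ?sqrtr0 // => i _; by rewrite mxE expr0n. Qed.

Lemma enormN v : enorm (- v) = enorm v.
Proof. by rewrite !enormE /sq; congr Num.sqrt; apply: eq_bigr => i _; rewrite mxE sqrrN. Qed.

Lemma enormB v w : enorm (v - w) = enorm (w - v).
Proof. by rewrite -enormN opprB. Qed.

Lemma coord_le v i : `|v ord0 i| <= enorm v.
Proof.
rewrite enormE -sqrtr_sqr ler_sqrt ?sq_ge0 // /sq (bigD1 i) //=.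
by rewrite lerDl; apply: sumr_ge0 => j _; rewrite sqr_ge0.
Qed.

Lemma sum_sq_le (x : 'I_n -> R) : (forall i, 0 <= x i) ->
  \sum_i x i ^+ 2 <= (\sum_i x i) ^+ 2.
Proof.
move=> x0; rewrite expr2 mulr_suml; apply: ler_sum => i _.
rewrite expr2 ler_wpM2l //. rewrite (bigD1 i) //= lerDl.
by apply: sumr_ge0.
Qed.

Lemma enorm_le_sum v : enorm v <= \sum_i `|v ord0 i|.
Proof.
rewrite enormE -(@ger0_norm _ (\sum_i `|v ord0 i|)); last by apply: sumr_ge0.
rewrite -sqrtr_sqr ler_sqrt ?sqr_ge0 // /sq.
rewrite (eq_bigr (fun i => `|v ord0 i| ^+ 2)); last by move=> i _; rewrite real_normK // num_real.
apply: sum_sq_le => i; exact: normr_ge0.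
Qed.

Lemma CS (a b : 'I_n -> R) :
  (\sum_i a i * b i) ^+ 2 <= (\sum_i a i ^+ 2) * (\sum_i b i ^+ 2).
Proof.
set A := \sum_i a i ^+ 2; set B := \sum_i b i ^+ 2; set P := \sum_i a i * b i.
have B0 : 0 <= B by apply: sumr_ge0 => i _; rewrite sqr_ge0.
have key : 0 <= B * (A * B - P ^+ 2).
  have -> : B * (A * B - P ^+ 2) = \sum_i (B * a i - P * b i) ^+ 2.
    have -> : \sum_i (B * a i - P * b i) ^+ 2 =
      \sum_i (B ^+ 2 * (a i ^+ 2) - (2 * B * P) * (a i * b i) + P ^+ 2 * (b i ^+ 2)).
      by apply: eq_bigr => i _; ring.
    rewrite big_split /= sumrB -!mulr_sumr -/A -/B -/P; ring.
  by apply: sumr_ge0 => i _; rewrite sqr_ge0.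
have [Bz|Bp] := eqVneq B 0.
  have bz : forall i, b i = 0.
    move=> i; apply/eqP; rewrite -sqrf_eq0; apply/eqP.
    by apply: (psumr_eq0P _ Bz) => // j _; rewrite sqr_ge0.
  rewrite /P big1 ?expr0n ?mulr_ge0 //= ?sumr_ge0 // => i _; rewrite ?sqr_ge0 ?bz ?mulr0 //.
have Bpos : 0 < B by rewrite lt_def Bp B0.
by rewrite -subr_ge0; move: key; rewrite pmulr_rge0.
Qed.

Lemma enormD v w : enorm (v + w) <= enorm v + enorm w.
Proof.
rewrite !enormE.
have h1 : sq (v + w) = sq v + 2 * (\sum_i v ord0 i * w ord0 i) + sq w.
  rewrite /sq mulr_sumr -!big_split /=; apply: eq_bigr => i _; rewrite mxE; ring.
rewrite -(@ger0_norm _ (Num.sqrt (sq v) + Num.sqrt (sq w))); last by rewrite addr_ge0 ?sqrtr_ge0.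
rewrite -sqrtr_sqr ler_sqrt ?sqr_ge0 // h1 sqrrD !sqr_sqrtr ?sq_ge0 //.
rewrite lerD2r lerD2l mulr2n.
set P := \sum_i _.
suff h : P <= Num.sqrt (sq v) * Num.sqrt (sq w) by lra.
rewrite -sqrtrM ?sq_ge0 //.
have [P0|P0] := leP P 0.
  by apply: (le_trans P0); rewrite sqrtr_ge0.
rewrite -(@ger0_norm _ P (ltW P0)) -sqrtr_sqr ler_sqrt; last by rewrite mulr_ge0 ?sq_ge0.
exact: CS.
Qed.

End Enorm.


Section Dist.
Variable R : realType.
Variable n : nat.
Implicit Types v w x y z : 'rV[R]_n.

Lemma enorm_tri x y z : enorm (x - z) <= enorm (x - y) + enorm (y - z).
Proof. by have := enormD (x - y) (y - z); rewrite addrA subrK. Qed.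

Lemma enorm_mulmx r (u : 'rV[R]_r) (N : 'M[R]_(r, n)) :
  enorm (u *m N) <= enorm u * \sum_j \sum_i `|N i j|.
Proof.
apply: (le_trans (enorm_le_sum _)); rewrite mulr_sumr; apply: ler_sum => j _.
rewrite mxE mulr_sumr; apply: (le_trans (ler_norm_sum _ _ _)); apply: ler_sum => i _.
by rewrite normrM ler_wpM2r // coord_le.
Qed.

Variable V : 'M[R]_n.

Let DS z := [set enorm (z - v) | v in [set v : 'rV[R]_n | (v <= V)%MS]].

Lemma DS_lb z : has_lbound (DS z).
Proof. by exists 0 => _ [v _ <-]; exact: enorm_ge0. Qed.

Lemma DS_n0 z : DS z !=set0.
Proof. by exists (enorm (z - 0)), 0 => //=; rewrite sub0mx. Qed.

Lemma dist_ge0 z : 0 <= dist_sub z V.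
Proof. by apply: lb_le_inf; [exact: DS_n0| move=> _ [v _ <-]; exact: enorm_ge0]. Qed.

Lemma dist_le z v : (v <= V)%MS -> dist_sub z V <= enorm (z - v).
Proof. by move=> hv; apply: (ge_inf (DS_lb z)); exists v. Qed.

Lemma dist_add a b : dist_sub (a + b) V <= dist_sub a V + enorm b.
Proof.
rewrite -lerBlDr; apply: lb_le_inf; first exact: DS_n0.
move=> _ [v hv <-]; rewrite lerBlDr.
apply: (le_trans (dist_le (a + b) hv)).
by have := enormD (a - v) b; rewrite addrAC.
Qed.

Lemma proj_exists : exists (Pm : 'M[R]_(n, \rank (V^C)%MS)) (N : 'M[R]_(\rank (V^C)%MS, n)),
  forall w : 'rV[R]_n, (w - w *m Pm *m N <= V)%MS.
Proof.
exists (proj_mx (V^C)%MS V *m pinvmx (row_base (V^C)%MS)), (row_base (V^C)%MS) => w.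
have h : (w *m proj_mx (V^C)%MS V <= row_base (V^C)%MS)%MS.
  by rewrite eq_row_base proj_mx_sub.
rewrite (mulmxA w) (mulmxKpV h).
apply: proj_mx_compl_sub; apply: submx_full.
by rewrite addsmxC addsmx_compl_full.
Qed.

End Dist.


Section Rect.
Variable R : realType.

Lemma diam_ge0 n (E : set 'rV[R]_n) : (0 <= diam E)%E.
Proof.
rewrite /diam; case: pselect => [//|hE].
have [x Ex] : E !=set0 by apply/set0P/eqP.
apply: le_ereal_sup_tmp; exists (enorm (x - x))%:E => //.
  by exists x => //; exists x.
by rewrite subrr enorm0.
Qed.

Lemma hausdorff_set0 n m : (1 <= m)%N -> hausdorff m (set0 : set 'rV[R]_n) = 0%E.
Proof.
move=> m1.
have H : forall delta, 0 < delta -> hcontent m delta (set0 : set 'rV[R]_n) = 0%E.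
  move=> delta dp; apply/eqP; rewrite eq_le; apply/andP; split.
    apply: ge_ereal_inf; eexists.
      exists (fun _ => set0) => //; split => //.
      by move=> k; rewrite /diam; case: pselect => h //=; rewrite lee_fin ltW.
    rewrite eseries0 // => i _ _.
    by rewrite /diam; case: pselect => h //=; rewrite expr0n; case: m m1.
  apply: le_ereal_inf_tmp => _ [E _ <-]; apply: nneseries_ge0 => k _ _.
  rewrite lee_fin exprn_ge0 //; apply: fine_ge0; exact: diam_ge0.
apply/eqP; rewrite eq_le; apply/andP; split.
  by apply: ge_ereal_sup => _ [delta dp <-]; rewrite H.
apply: le_ereal_sup_tmp; exists (hcontent m 1 (set0 : set 'rV[R]_n)).
  by exists 1 => //=.
by rewrite H.
Qed.


Lemma rect_of_cone n r (V : 'M[R]_n) (S : set 'rV[R]_n) (beta : R)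
  (Pm : 'M[R]_(n, r)) (N : 'M[R]_(r, n)) :
  (1 <= r)%N -> 0 < beta -> (forall w : 'rV[R]_n, (w - w *m Pm *m N <= V)%MS) ->
  (forall x y, S x -> S y -> beta * enorm (y - x) <= dist_sub (y - x) V) ->
  rectifiable r S.
Proof.
move=> r1 bp hP hS.
set C := \sum_j \sum_i `|N i j|.
have C0 : 0 <= C by apply: sumr_ge0 => j _; apply: sumr_ge0 => i _.
set L := C / beta.
have L0 : 0 <= L by rewrite divr_ge0 // ltW.
set pi := fun q : 'rV[R]_n => q *m Pm.
have key : forall x y, S x -> S y -> enorm (y - x) <= L * enorm (pi y - pi x).
  move=> x y Sx Sy.
  have h1 := hS x y Sx Sy.
  have h2 : dist_sub (y - x) V <= enorm ((y - x) *m Pm) * C.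
    apply: (le_trans (dist_le _ (hP (y - x)))).
    rewrite opprB addrC subrK; exact: enorm_mulmx.
  rewrite /L /pi -mulmxBl mulrAC ler_pdivlMr //.
  by rewrite mulrC; apply: (le_trans h1); rewrite mulrC.
have [S0|/set0P [p0 Sp0]] := eqVneq S set0.
  exists (fun _ _ => 0); split.
    by move=> _; exists 0 => x y; rewrite subrr enorm0 mul0r.
  by rewrite S0 set0D hausdorff_set0.
set T := fun (i : 'I_n) (z : 'rV[R]_r) =>
  [set q ord0 i + L * enorm (z - pi q) | q in S].
set f := fun (i : 'I_n) (z : 'rV[R]_r) => inf (T i z).
have Tn0 : forall i z, T i z !=set0 by move=> i z; exists (p0 ord0 i + L * enorm (z - pi p0)), p0.
have Tlb : forall i z, lbound (T i z) (p0 ord0 i - L * enorm (z - pi p0)).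
  move=> i z _ [q Sq <-].
  have h := key q p0 Sq Sp0.
  have h3 : p0 ord0 i - q ord0 i <= L * enorm (pi p0 - pi q).
    apply: le_trans h; apply: le_trans (coord_le _ i).
    by rewrite !mxE ler_norm.
  have h4 : enorm (pi p0 - pi q) <= enorm (z - pi p0) + enorm (z - pi q).
    by rewrite (enormB z (pi p0)); exact: enorm_tri.
  have h5 := ler_wpM2l L0 h4.
  rewrite mulrDr in h5; lra.
have Thl : forall i z, has_lbound (T i z) by move=> i z; eexists; exact: Tlb.
have fS : forall i p, S p -> f i (pi p) = p ord0 i.
  move=> i p Sp; apply/eqP; rewrite eq_le; apply/andP; split.
    by apply: ge_inf => //; exists p => //; rewrite subrr enorm0 mulr0 addr0.
  apply: lb_le_inf => // _ [q Sq <-].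
  have h := key q p Sq Sp.
  have h3 : p ord0 i - q ord0 i <= L * enorm (pi p - pi q).
    apply: le_trans h; apply: le_trans (coord_le _ i).
    by rewrite !mxE ler_norm.
  lra.
have fL1 : forall i z z', f i z <= f i z' + L * enorm (z - z').
  move=> i z z'; rewrite -lerBlDr; apply: lb_le_inf => // _ [q Sq <-].
  rewrite lerBlDr.
  apply: (le_trans (ge_inf (Thl i z) _)); first by exists q.
  have h4 := enorm_tri z z' (pi q).
  have h5 := ler_wpM2l L0 h4.
  rewrite mulrDr in h5; lra.
have fL : forall i z z', `|f i z - f i z'| <= L * enorm (z - z').
  move=> i z z'; rewrite ler_norml; apply/andP; split.
    by have := fL1 i z' z; rewrite enormB; lra.
  by have := fL1 i z z'; lra.
set F := fun z : 'rV[R]_r => \row_i f i z.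
exists (fun _ => F); split.
  move=> _; exists (L *+ n) => z z'.
  apply: (le_trans (enorm_le_sum _)).
  have -> : L *+ n * enorm (z - z') = \sum_(i < n) (L * enorm (z - z')).
    by rewrite sumr_const card_ord mulrnAl.
  apply: ler_sum => i _; rewrite !mxE; exact: fL.
rewrite (_ : _ `\` _ = set0) ?hausdorff_set0 //.
apply/seteqP; split => // x [Sx]; apply; exists 0%N => //; exists (pi x) => //.
apply/matrixP => a b; rewrite (ord1 a) !mxE; exact: fS.
Qed.

End Rect.


Section Meas.
Variable R : realType.
Variable n : nat.
Variable mu : set 'rV[R]_n -> \bar R.
Hypothesis hmu : outer_measure_on mu.

Lemma om_mono A B : A `<=` B -> (mu A <= mu B)%E.
Proof. by case: hmu => _ _ h _; apply: h. Qed.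

Lemma om_ge0 A : (0 <= mu A)%E.
Proof. by case: hmu. Qed.

Lemma om_null_sub A B : A `<=` B -> mu B = 0%E -> mu A = 0%E.
Proof.
move=> AB B0; apply/eqP; rewrite eq_le om_ge0 andbT -B0; exact: om_mono.
Qed.

Lemma om_null_bigcup (F : nat -> set 'rV[R]_n) : (forall k, mu (F k) = 0%E) ->
  mu (\bigcup_k F k) = 0%E.
Proof.
move=> F0; apply/eqP; rewrite eq_le om_ge0 andbT.
case: hmu => _ _ _ /(_ F) h; apply: (le_trans h).
by rewrite eseries0.
Qed.

Lemma om_null_setU A B : mu A = 0%E -> mu B = 0%E -> mu (A `|` B) = 0%E.
Proof.
move=> A0 B0.
apply: (@om_null_sub _ (\bigcup_k (fun k => if k == 0%N then A else B) k)).
  by move=> x [Ax|Bx]; [exists 0%N | exists 1%N].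
by apply: om_null_bigcup => k; case: (k == 0%N).
Qed.

Lemma local_null (A : set 'rV[R]_n) (F : nat -> set 'rV[R]_n) (eta : nat -> R) :
  (forall k, 0 < eta k) ->
  A `<=` \bigcup_k F k ->
  (forall k S, S `<=` F k -> (forall y z, S y -> S z -> enorm (y - z) < eta k) ->
     mu S = 0%E) ->
  mu A = 0%E.
Proof.
move=> eta0 AF hS.
pose h k := eta k / (n.+1)%:R.
have h0 : forall k, 0 < h k by move=> k; rewrite divr_gt0.
pose cell (kz : nat * 'rV[int]_n) :=
  [set x | F kz.1 x /\ forall i, Num.floor (x ord0 i / h kz.1) = kz.2 ord0 i].
pose G j := if unpickle j is Some kz then cell kz else set0.
apply: (@om_null_sub _ (\bigcup_j G j)).
  move=> x Ax; have [k _ Fx] := AF x Ax.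
  exists (pickle ((k, \row_i Num.floor (x ord0 i / h k)) : nat * 'rV[int]_n)) => //.
  by rewrite /G pickleK; split => // i; rewrite mxE.
apply: om_null_bigcup => j; rewrite /G; case: (unpickle j) => [[k z]|]; last first.
  by case: hmu.
apply: (hS k); first by move=> x [] /=.
move=> y w [_ hy] [_ hw].
apply: (le_lt_trans (enorm_le_sum _)).
have hi : forall i, `|(y - w) ord0 i| <= h k.
  move=> i; rewrite !mxE.
  have := hy i; have := hw i => /= e1 e2.
  have := floor_itv (y ord0 i / h k); have := floor_itv (w ord0 i / h k).
  rewrite e1 e2 => /andP [a1 a2] /andP [b1 b2].
  rewrite intrD in a2 b2.
  have : `|y ord0 i / h k - w ord0 i / h k| <= 1.
    rewrite ler_norml; apply/andP; split; lra.
  have hk1 : 0 < (h k)^-1 by rewrite invr_gt0.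
  rewrite -mulrBl normrM (gtr0_norm hk1).
  by rewrite ler_pdivrMr ?h0 // mul1r.
apply: (le_lt_trans (ler_sum _ (fun i _ => hi i))).
rewrite sumr_const card_ord /h.
have e0 := eta0 k.
have hn : (n%:R : R) < n.+1%:R by rewrite ltr_nat.
have hn1 : (0 : R) < n.+1%:R by rewrite ltr0Sn.
rewrite -(mulr_natr (eta k / _) n) -mulrA gtr_pMr // mulrC ltr_pdivrMr // mul1r //.
Qed.

End Meas.

Lemma limsup_lt (R : realType) (g : R -> R) (a : R) : (limsup0 g < a%:E)%E ->
  exists2 delta, 0 < delta & forall r, 0 < r < delta -> g r < a.
Proof.
move=> /ereal_inf_lt [_ [delta dp <-]] hs; exists delta => // r hr.
rewrite -lte_fin; apply: le_lt_trans hs; apply: ereal_sup_ubound; by exists r.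
Qed.


Section Cone.
Variable R : realType.
Variable n : nat.
Variable V : 'M[R]_n.
Variable mu : set 'rV[R]_n -> \bar R.
Hypothesis hmu : outer_measure_on mu.
Variables (d alpha c : R) (j : nat).
Hypothesis d0 : 0 < d.
Hypothesis a0 : 0 < alpha.
Hypothesis a1 : alpha <= 1.
Hypothesis hK : 24 <= alpha * 2 ^+ j.
Hypothesis hc : c * d ^+ j = 2^-1.
Hypothesis c0 : 0 < c.

Definition good (delta : R) (x : 'rV[R]_n) :=
  [/\ (forall r, 0 < r < delta -> mu_ratio mu (cone_r x r V alpha) (cball x r) < c),
      (forall t, 0 < t < delta -> mu_ratio mu (cball x (2 * t)) (cball x t) < d),
      (forall t, 0 < t -> mu (cball x t) <> 0%E) &
      (forall t, 0 < t < delta -> (mu (cball x t) < +oo)%E)].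

Lemma fine_pos x t delta : good delta x -> 0 < t < delta -> 0 < fine (mu (cball x t)).
Proof.
case=> _ _ h3 h4 ht; apply: fine_gt0; rewrite h4 // andbT lt_def.
by rewrite om_ge0 // andbT; apply/eqP; apply: h3; case/andP: ht.
Qed.

Lemma fin_ball x t delta : good delta x -> 0 < t < delta -> mu (cball x t) \is a fin_num.
Proof. by case=> _ _ _ h4 ht; rewrite ge0_fin_numE ?om_ge0 ?h4. Qed.

Lemma fine_mono A B : A `<=` B -> mu B \is a fin_num -> fine (mu A) <= fine (mu B).
Proof.
move=> AB hB; have hAB := om_mono hmu AB.
apply: fine_le => //; rewrite ge0_fin_numE ?om_ge0 //.
by apply: le_lt_trans hAB _; rewrite -ge0_fin_numE ?om_ge0.
Qed.

Lemma fin_sub A B : A `<=` B -> mu B \is a fin_num -> mu A \is a fin_num.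
Proof.
move=> AB hB; rewrite ge0_fin_numE ?om_ge0 //.
by apply: le_lt_trans (om_mono hmu AB) _; rewrite -ge0_fin_numE ?om_ge0.
Qed.

Lemma cone_free delta x y : 0 < delta -> good delta x -> good delta y ->
  0 < enorm (y - x) -> enorm (y - x) * 2 ^+ j < delta ->
  dist_sub (y - x) V < alpha / 2 * enorm (y - x) -> False.
Proof.
move=> dp gx gy sp sK hd.
set s := enorm (y - x) in sp sK hd.
set K : R := 2 ^+ j in sK.
have hK' : 24 <= alpha * K := hK.
have K2 : 2 <= K.
  have : alpha * K <= K by rewrite ler_piMl // exprn_ge0.
  lra.
set rho := alpha * s / 8.
have as0 : 0 < alpha * s by rewrite mulr_gt0.
have ass : alpha * s <= s by rewrite ler_piMl // ltW.
have rp : 0 < rho by rewrite /rho divr_gt0.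
have rs : rho <= s by rewrite /rho; lra.
have Krho : 3 * s <= K * rho.
  have : 24 * s <= alpha * K * s by rewrite ler_wpM2r // ltW.
  have : alpha * K * s = K * (alpha * s) by ring.
  rewrite /rho; lra.
have Krd : K * rho < delta.
  have : K * rho <= K * s by rewrite ler_wpM2l //; lra.
  lra.
set a := fun t => fine (mu (cball y t)).
have iter : forall i, 2 ^+ i * rho < delta -> a (2 ^+ i * rho) <= d ^+ i * a rho.
  elim=> [|i IH]; first by rewrite !expr0 !mul1r.
  rewrite exprS -mulrA => hi.
  have pi : 0 < 2 ^+ i * rho by rewrite mulr_gt0 // exprn_gt0.
  have hi' : 2 ^+ i * rho < delta by lra.
  have := IH hi'.
  set u := 2 ^+ i * rho.
  have au := fine_pos gy (_ : 0 < u < delta); rewrite pi hi' in au.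
  case: gy => _ /(_ u) hdb _ _.
  have := hdb (_ : 0 < u < delta); rewrite pi hi' => /(_ isT).
  rewrite /mu_ratio ltr_pdivrMr; last exact: au.
  move=> h1 h2; rewrite exprS -mulrA; apply: (le_trans (ltW h1)).
  by rewrite ler_wpM2l // ltW.
have aK := iter j Krd.
have claim1 : cball y rho `<=` cone_r x (2 * s) V alpha.
  move=> z; rewrite /cball /= => hz.
  have e1 := enorm_tri z y x.
  have e2 := enorm_tri y z x.
  rewrite (enormB y z) in e2.
  have ez : (y - x) + (z - y) = z - x by rewrite addrC addrA subrK.
  have e3 := dist_add V (y - x) (z - y); rewrite ez in e3.
  rewrite -/s in e1 e2 e3.
  split; first by rewrite /cball /=; lra.
  rewrite /cone /=.
  have e4 : alpha * (s - rho) <= alpha * enorm (z - x) by rewrite ler_pM2l //; lra.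
  have e5 : alpha * rho <= rho by rewrite ler_piMl // ltW.
  rewrite mulrBr in e4.
  rewrite /rho in e5 e4 hz e3 rs |- *.
  lra.
have claim2 : cball x (2 * s) `<=` cball y (K * rho).
  move=> z; rewrite /cball /= => hz.
  have e1 := enorm_tri z x y.
  rewrite (enormB x y) -/s in e1; lra.
have h2s : 0 < 2 * s < delta by apply/andP; split; lra.
have hKr : 0 < K * rho < delta by apply/andP; split => //; rewrite mulr_gt0 //; lra.
have hr : 0 < rho < delta by apply/andP; split => //; lra.
have Dp := fine_pos gx h2s.
have DK : fine (mu (cball x (2 * s))) <= a (K * rho).
  apply: fine_mono => //; exact: fin_ball gy hKr.
have Cn : a rho <= fine (mu (cone_r x (2 * s) V alpha)).
  apply: fine_mono claim1 _; apply: fin_sub (fin_ball gx h2s); by move=> z [].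
have arp := fine_pos gy hr.
case: gx => /(_ (2 * s) h2s) hcone _ _ _.
rewrite /mu_ratio ltr_pdivrMr // in hcone.
have : c * fine (mu (cball x (2 * s))) <= c * (d ^+ j * a rho).
  rewrite ler_pM2l //; exact: le_trans DK aK.
rewrite mulrA hc => h; rewrite /a in Cn h; lra.
Qed.

End Cone.

Unset Implicit Arguments. Set Strict Implicit.

Lemma small_inv (R : realType) (t : R) : 0 < t -> exists k : nat, (k.+1%:R)^-1 < t.
Proof.
move=> tp; exists (Num.truncn t^-1).
rewrite invf_plt ?posrE ?ltr0Sn //; exact: truncnS_gt.
Qed.

Theorem theorem5p1 (R : realType) (d alpha : R) :
  0 < d -> 0 < alpha <= 1 ->
  exists2 c : R, 0 < c &
    forall (n m : nat) (V : 'M[R]_n) (mu : set 'rV[R]_n -> \bar R),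
      (1 <= m < n)%N ->
      \rank V = (n - m)%N ->
      is_measure mu ->
      purely_unrectifiable m mu ->
      ae mu (fun x => (limsup0 (fun r => mu_ratio mu (cball x (2 * r)) (cball x r))
                       < d%:E)%E) ->
      ae mu (fun x => (c%:E <=
                       limsup0 (fun r => mu_ratio mu (cone_r x r V alpha) (cball x r)))%E).
Proof.
move=> d0 /andP [a0 a1].
have [j hK] : exists j : nat, 24 <= alpha * 2 ^+ j.
  exists (Num.truncn (24 / alpha)).
  have h1 := truncnS_gt (24 / alpha).
  have h2 : ((Num.truncn (24 / alpha)).+1%:R : R) <= 2 ^+ Num.truncn (24 / alpha).
    by rewrite -natrX ler_nat ltn_expl.
  have h3 : 24 / alpha < 2 ^+ Num.truncn (24 / alpha) by exact: lt_le_trans h1 h2.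
  by rewrite mulrC -ler_pdivrMr // ltW.
have dj : 0 < d ^+ j by rewrite exprn_gt0.
set c := (d ^+ j)^-1 / 2.
have c0 : 0 < c by rewrite /c divr_gt0 // invr_gt0.
have hc : c * d ^+ j = 2^-1 by rewrite /c mulrAC mulVf ?mul1r // gt_eqF.
exists c => // n m V mu /andP [m1 mn] hrank [hom hloc hnt hbor hreg] hpu hdoub.
pose Dset := [set x | ~ (limsup0 (fun r => mu_ratio mu (cball x (2 * r)) (cball x r)) < d%:E)%E].
have D0 : mu Dset = 0%E := hdoub.
pose Zset := [set x : 'rV[R]_n | exists2 t, 0 < t & mu (cball x t) = 0%E].
have Z0 : mu Zset = 0%E.
  apply: (local_null hom (F := fun k => [set x | mu (cball x (k.+1%:R)^-1) = 0%E]) (eta := fun k => (k.+1%:R)^-1)).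
  - by move=> k; rewrite invr_gt0 ltr0Sn.
  - move=> x [t tp ht]; have [k hk] := small_inv _ _ tp; exists k => //=.
    have hh : cball x (k.+1%:R)^-1 `<=` cball x t by move=> y; rewrite /cball /= => hy; exact: le_trans hy (ltW hk).
    exact: (om_null_sub hom hh ht).
  - move=> k S SF hS.
    have [->|/set0P [p Sp]] := eqVneq S set0; first by case: hom.
    have hp : mu (cball p (k.+1%:R)^-1) = 0%E := SF p Sp.
    have hh : S `<=` cball p (k.+1%:R)^-1.
      by move=> y Sy; rewrite /cball /=; exact: ltW (hS y p Sy Sp).
    exact: (om_null_sub hom hh hp).
pose Abad := [set x | ~ (c%:E <= limsup0 (fun r => mu_ratio mu (cone_r x r V alpha) (cball x r)))%E].
have A0 : mu (Abad `&` ~` Dset `&` ~` Zset) = 0%E.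
  apply: (local_null hom (F := fun k => good V mu d alpha c (k.+1%:R)^-1) (eta := fun k => (k.+1%:R)^-1 / 2 ^+ j)).
  - by move=> k; rewrite divr_gt0 ?exprn_gt0 // invr_gt0 ltr0Sn.
  - move=> x [[Ax Dx] Zx].
    have [d1 d1p h1] : exists2 d1, 0 < d1 & forall r, 0 < r < d1 ->
        mu_ratio mu (cone_r x r V alpha) (cball x r) < c.
      by apply: limsup_lt; rewrite ltNge; apply/negP; exact: Ax.
    have [d2 d2p h2] : exists2 d2, 0 < d2 & forall r, 0 < r < d2 ->
        mu_ratio mu (cball x (2 * r)) (cball x r) < d.
      by apply: limsup_lt; apply: contrapT; exact: Dx.
    have [d3 d3p h3] := hloc x.
    have hZ : forall t, 0 < t -> mu (cball x t) <> 0%E by move=> t tp ht; apply: Zx; exists t.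
    have dm : 0 < Num.min d1 (Num.min d2 d3) by rewrite !lt_min d1p d2p d3p.
    have [k hk] := small_inv _ _ dm.
    move: hk; rewrite !lt_min => /andP [k1 /andP [k2 k3]].
    exists k => //; split.
    + move=> r /andP [r0 rk]; apply: h1; rewrite r0 /=; exact: lt_trans rk k1.
    + move=> r /andP [r0 rk]; apply: h2; rewrite r0 /=; exact: lt_trans rk k2.
    + exact: hZ.
    + move=> t /andP [t0 tk]; apply: le_lt_trans h3.
      apply: (om_mono hom) => y; rewrite /cball /= => hy.
      exact: le_trans hy (ltW (lt_trans tk k3)).
  - move=> k S SF hS.
    have hpair : forall x y, S x -> S y -> alpha / 2 * enorm (y - x) <= dist_sub (y - x) V.
      move=> x y Sx Sy; rewrite leNgt; apply/negP => hlt.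
      have [s0|sp] := eqVneq (enorm (y - x)) 0.
        by move: hlt; rewrite s0 mulr0 ltNge dist_ge0.
      have sp' : 0 < enorm (y - x) by rewrite lt_def sp enorm_ge0.
      apply: (@cone_free R n V mu hom d alpha c j d0 a0 a1 hK hc c0 ((k.+1%:R)^-1) x y) => //.
      + exact: SF.
      + exact: SF.
      + by have := hS y x Sy Sx; rewrite ltr_pdivlMr ?exprn_gt0.
    have [Pm [N hP]] := proj_exists V.
    have eq : \rank (V^C)%MS = m by rewrite mxrank_compl hrank; lia.
    have r1 : (1 <= \rank (V^C)%MS)%N by rewrite eq.
    have hb : 0 < alpha / 2 by rewrite divr_gt0.
    have hr := rect_of_cone r1 hb hP hpair.
    rewrite eq in hr; exact: hpu hr.
have U0 := om_null_setU hom (om_null_setU hom A0 D0) Z0.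
rewrite /ae; apply: (om_null_sub hom _ U0).
move=> x /= hx.
have [Zx|Zx] := pselect (Zset x); first by right.
have [Dx|Dx] := pselect (Dset x); first by left; right.
by left; left.
Qed.
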